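(* In the linear model described in the context, for all $\alpha\in[0,1]$ a minimizer of $\mathcal R(f)$ subject to $\mathcal U(f)\le\alpha\,\mathcal U(f^* )$ is given for all $(\boldsymbol x,s)\in\mathbb R^p\times[K]$ by $$f^*_\alpha(\boldsymbol x,s)=\langle\boldsymbol x,\boldsymbol\beta^*\rangle+\sqrt\alpha\,b^*_s+(1-\sqrt\alpha)\sum_{s'=1}^Kw_{s'}b^*_{s'}.$$
   Context: Model: $Y=\langle\boldsymbol X,\boldsymbol\beta^*\rangle+b^*_S+\xi$ with $\boldsymbol\beta^*\in\mathbb R^p$, $\boldsymbol b^*\in\mathbb R^K$, $\boldsymbol X\sim\mathcal N(\boldsymbol0,\boldsymbol\Sigma)$, $\boldsymbol\Sigma$ symmetric positive definite, $\boldsymbol X$ independent of $S\in[K]$, $\xi\sim\mathcal N(0,\sigma^2)$ independent; $f^*(\boldsymbol x,s)=\langle\boldsymbol x,\boldsymbol\beta^*\rangle+b^*_s$. Weights $\boldsymbol w\in\Delta^{K-1}$. $\mathcal R(f)=\sum_sw_s\mathbb E(f^*(\boldsymbol X,s)-f(\boldsymbol X,s))^2$ and $\mathcal U(f)=\min_{\nu\in\mathcal P_2(\mathbb R)}\sum_sw_s\mathsf W_2^2(\mathrm{Law}(f(\boldsymbol X,s)),\nu)$, with $\boldsymbol X\sim\mathcal N(\boldsymbol0,\boldsymbol\Sigma)$ and $\mathsf W_2$ the Wasserstein-2 distance. *)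

(* Defs.v *)
From HB Require Import structures.
From mathcomp Require Import all_boot all_order all_algebra.
From mathcomp Require Import all_classical all_reals all_analysis.
Set Implicit Arguments. Unset Strict Implicit. Unset Printing Implicit Defensive.
Import Order.TTheory GRing.Theory Num.Theory.
Local Open Scope classical_set_scope.
Local Open Scope ring_scope.

Section Defs.
Context {R : realType}.

Definition inner (p : nat) (x y : 'rV[R]_p) : R := \sum_(i < p) x 0 i * y 0 i.

Definition quadform (p : nat) (Sigma : 'M[R]_p) (v : 'rV[R]_p) : R :=
  (v *m Sigma *m v^T) 0 0.

Definition sym_posdef (p : nat) (Sigma : 'M[R]_p) : Prop :=
  Sigma^T = Sigma /\ forall v : 'rV[R]_p, v != 0 -> 0 < quadform Sigma v.

Definition gaussian_vector d (Omega : measurableType d) (P : probability Omega R)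
  (p : nat) (Sigma : 'M[R]_p) (X : Omega -> 'rV[R]_p) : Prop :=
  (forall i : 'I_p, measurable_fun setT (fun w => X w 0 i)) /\
  forall v : 'rV[R]_p, v != 0 ->
    forall A : set R, measurable A ->
      P ((fun w => inner v (X w)) @^-1` A) =
      normal_prob 0 (Num.sqrt (quadform Sigma v)) A.

Definition simplex (K : nat) (w : 'I_K -> R) : Prop :=
  (forall s, 0 <= w s) /\ \sum_(s < K) w s = 1.

Definition law d (Omega : measurableType d) (P : probability Omega R)
  (Z : Omega -> R) : set R -> \bar R := pushforward P Z.

Definition coupling (mu nu : set R -> \bar R) (pi : probability (R * R)%type R) : Prop :=
  (forall A : set R, measurable A -> pi (A `*` setT) = mu A) /\
  (forall B : set R, measurable B -> pi (setT `*` B) = nu B).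

Definition W2sq (mu nu : set R -> \bar R) : \bar R :=
  ereal_inf [set c | exists pi : probability (R * R)%type R,
    coupling mu nu pi /\ c = (\int[pi]_z ((z.1 - z.2) ^+ 2)%:E)%E].

Definition P2 (nu : probability R R) : Prop :=
  (\int[nu]_x ((x ^+ 2)%:E) < +oo)%E.

Definition risk d (Omega : measurableType d) (P : probability Omega R)
  (p K : nat) (X : Omega -> 'rV[R]_p) (w : 'I_K -> R)
  (fstar f : 'rV[R]_p -> 'I_K -> R) : \bar R :=
  (\sum_(s < K) (w s)%:E * \int[P]_om ((fstar (X om) s - f (X om) s) ^+ 2)%:E)%E.

Definition unfairness d (Omega : measurableType d) (P : probability Omega R)
  (p K : nat) (X : Omega -> 'rV[R]_p) (w : 'I_K -> R)
  (f : 'rV[R]_p -> 'I_K -> R) : \bar R :=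
  ereal_inf [set u | exists nu : probability R R, P2 nu /\
    u = (\sum_(s < K) (w s)%:E * W2sq (law P (fun om => f (X om) s)) nu)%E].

Definition admissible d (Omega : measurableType d) (P : probability Omega R)
  (p K : nat) (X : Omega -> 'rV[R]_p) (f : 'rV[R]_p -> 'I_K -> R) : Prop :=
  forall s : 'I_K, measurable_fun setT (fun om => f (X om) s).

End Defs.

(* Main.v *)
From HB Require Import structures.
From mathcomp Require Import all_boot all_order all_algebra.
From mathcomp Require Import all_classical all_reals all_analysis measurable_realfun.
From mathcomp Require Import ring lra.
Require Import Defs.
Import Order.TTheory GRing.Theory Num.Theory.
Local Open Scope classical_set_scope.
Local Open Scope ring_scope.

Definition mkmf {d1 d2} {T1 : measurableType d1} {T2 : measurableType d2}
  (f : T1 -> T2) (mf : measurable_fun setT f) : {mfun T1 >-> T2} :=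
  MeasurableFun.Pack (MeasurableFun.Class (isMeasurableFun.Build _ _ _ _ _ mf)).

Section generic.
Context {R : realType}.
Implicit Types d : measure_display.
Lemma jensen_sq d (T : measurableType d) (Q : probability T R) (h : T -> R) (a : R) :
  measurable_fun setT h -> Q.-integrable setT (EFin \o h) ->
  (\int[Q]_x (h x)%:E = a%:E)%E -> ((a ^+ 2)%:E <= \int[Q]_x ((h x ^+ 2)%:E))%E.
Proof.
move=> mh ih ha.
have [->|hfin] := eqVneq (\int[Q]_x ((h x ^+ 2)%:E))%E +oo%E; first exact: leey.
have ih2 : Q.-integrable setT (fun x => (h x ^+ 2)%:E).
  apply/integrableP; split; first by apply/measurable_EFinP; exact: measurable_funX.
  under eq_integral do rewrite gee0_abs ?lee_fin ?sqr_ge0 //.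
  by rewrite ltey.
have ic : Q.-integrable setT (EFin \o cst (a ^+ 2)) :=
  finite_measure_integrable_cst _ _ measurableT.
have e2 : (fun x => ((2 * a) * h x)%:E) = (fun x => ((2 * a)%:E * (h x)%:E)%E).
  by apply/funext => x; rewrite EFinM.
have i2 : Q.-integrable setT (fun x => ((2 * a) * h x)%:E).
  by rewrite e2; exact: integrableZl.
have : (\int[Q]_x (((2 * a) * h x)%R%:E - (EFin \o cst (a ^+ 2)%R) x) <=
        \int[Q]_x ((h x ^+ 2)%:E))%E.
  apply: le_integral => //; first exact: integrableB.
  move=> x _; rewrite /= -EFinB lee_fin -subr_ge0.
  have -> : h x ^+ 2 - (2 * a * h x - a ^+ 2) = (h x - a) ^+ 2 by ring.
  exact: sqr_ge0.
have ec : (\int[Q]_x (EFin \o cst (a ^+ 2)%R) x = (a ^+ 2)%:E)%E.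
  rewrite (_ : EFin \o cst (a ^+ 2)%R = cst (a ^+ 2)%:E) //.
  rewrite integral_cst // -[RHS]mule1; congr (_ * _)%E; exact: probability_setT.
rewrite integralB // ec e2 integralZl // ha -EFinM -EFinB.
have -> : 2 * a * a - a ^+ 2 = a ^+ 2 by ring.
by [].
Qed.

Lemma transfer_abs {d} {T : measurableType d} {mu : {measure set T -> \bar R}}
  {phi : T -> R} {nu : {measure set R -> \bar R}} :
  measurable_fun setT phi ->
  (forall A, measurable A -> mu (phi @^-1` A) = nu A) ->
  (\int[mu]_x `|(phi x)%:E| = \int[nu]_y `|y%:E|)%E.
Proof.
move=> mphi hA.
have -> : (\int[mu]_x `|(phi x)%:E| = \int[mu]_(x in phi @^-1` setT) ((fun y : R => `|y%:E|) \o phi) x)%E.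
  by rewrite preimage_setT.
rewrite -ge0_integral_pushforward //.
- by apply: eq_measure_integral => A mA _; exact: hA.
- by apply: measurableT_comp => //; exact: measurable_EFinP.
Qed.

Lemma transfer_int d (T : measurableType d) (mu : {measure set T -> \bar R})
  (phi : T -> R) (nu : {measure set R -> \bar R}) :
  measurable_fun setT phi ->
  (forall A, measurable A -> mu (phi @^-1` A) = nu A) ->
  (mu.-integrable setT (EFin \o phi) <-> nu.-integrable setT EFin) /\
  (nu.-integrable setT EFin -> \int[mu]_x (phi x)%:E = \int[nu]_y y%:E)%E.
Proof.
move=> mphi hA.
have ab := transfer_abs mphi hA.
have mE : measurable_fun [set: R] (@EFin R) by apply/measurable_EFinP.
have mEphi : measurable_fun setT (EFin \o phi) by exact/measurable_EFinP.
split.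
  split => /integrableP [_ fin]; apply/integrableP; split => //.
  - by rewrite -ab.
  - by rewrite ab.
move=> inu.
have imu : mu.-integrable setT (EFin \o phi).
  by apply/integrableP; split => //; rewrite ab; case/integrableP: inu.
have -> : (\int[mu]_x (phi x)%:E = \int[mu]_(x in phi @^-1` setT) (EFin \o phi) x)%E.
  by rewrite preimage_setT.
rewrite -integral_pushforward //.
by apply: eq_measure_integral => A mA _; exact: hA.
Qed.

End generic.

Section w2.
Context {R : realType} {d : measure_display} {Omega : measurableType d}
  (P : probability Omega R).

Lemma W2_upper (Y1 Y2 : Omega -> R) : measurable_fun setT Y1 -> measurable_fun setT Y2 ->
  (W2sq (law P Y1) (law P Y2) <= \int[P]_om ((Y1 om - Y2 om) ^+ 2)%:E)%E.
Proof.
move=> m1 m2.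
have mp := measurable_fun_pair m1 m2.
apply: ge_ereal_inf.
exists (\int[P]_om ((Y1 om - Y2 om) ^+ 2)%:E)%E => //.
exists (distribution P (mkmf _ mp)); split; first split.
- move=> A mA /=; rewrite /distribution /pushforward /law /pushforward.
  by congr (P _); apply/seteqP; split => x /=; [case|].
- move=> B mB /=; rewrite /distribution /pushforward /law /pushforward.
  by congr (P _); apply/seteqP; split => x /=; [case|].
- rewrite ge0_integral_distribution //.
  + apply/measurable_EFinP; apply: measurable_funX.
    apply: measurable_funB; [exact: measurable_fst | exact: measurable_snd].
  + by move=> y; rewrite lee_fin sqr_ge0.
Qed.

Lemma W2_lower (Y : Omega -> R) (nu : probability R R) (a c : R) :
  measurable_fun setT Y -> P.-integrable setT (EFin \o Y) ->
  (\int[P]_om (Y om)%:E = a%:E)%E ->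
  nu.-integrable setT EFin -> (\int[nu]_x x%:E = c%:E)%E ->
  (((a - c) ^+ 2)%:E <= W2sq (law P Y) nu)%E.
Proof.
move=> mY iY hY inu hnu.
apply: le_ereal_inf_tmp => _ [pi [[c1 c2] ->]].
have [t1 e1] := @transfer_int _ _ _ P Y (distribution P (mkmf _ mY)) mY (fun A mA => erefl).
have ilaw := proj1 t1 iY.
have ilawE := e1 ilaw.
have [t2 e2] := @transfer_int _ _ _ pi fst (distribution P (mkmf _ mY)) measurable_fst
  (fun A mA => eq_trans (f_equal pi (esym (setXT _ A))) (c1 A mA)).
have ifst := proj2 t2 ilaw.
have efst := e2 ilaw.
have [t3 e3] := @transfer_int _ _ _ pi snd nu measurable_snd
  (fun B mB => eq_trans (f_equal pi (esym (setTX _ B))) (c2 B mB)).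
have isnd := proj2 t3 inu.
have esnd := e3 inu.
apply: (@jensen_sq _ _ _ pi (fun z => z.1 - z.2)).
- by apply: measurable_funB; [exact: measurable_fst | exact: measurable_snd].
- have -> : EFin \o (fun z : R * R => z.1 - z.2) = (fun z => (z.1)%:E - (z.2)%:E)%E.
    by apply/funext => z; rewrite /= EFinB.
  exact: integrableB.
- under eq_integral do rewrite EFinB.
  rewrite integralB // efst esnd -ilawE hY hnu -EFinB.
  by [].
Qed.

End w2.
Section gauss.
Context {R : realType}.
Local Notation mu := (@lebesgue_measure R).
Lemma sq_normal_bound (s x : R) : s != 0 ->
  x ^+ 2 * normal_pdf 0 s x <= (8 * s ^+ 2 * normal_peak s / normal_peak (2 * s)) * normal_pdf 0 (2 * s) x.
Proof.
move=> s0.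
have s20 : 2 * s != 0 by rewrite mulf_neq0 // pnatr_eq0.
rewrite /normal_pdf (negbTE s0) (negbTE s20) /normal_fun !subr0.
have pk0 := normal_peak_gt0 s0.
have pk20 := normal_peak_gt0 s20.
set a := x ^+ 2 / (s ^+ 2 *+ 2 * 4).
have s2 : 0 < s ^+ 2 by rewrite exprn_even_gt0.
have a0 : 0 <= a by rewrite divr_ge0 ?sqr_ge0 // mulr_ge0 // ltW // pmulrn_lgt0.
have e1 : - x ^+ 2 / (s ^+ 2 *+ 2) = - (4 * a).
  by rewrite /a; field.
have e2 : - x ^+ 2 / ((2 * s) ^+ 2 *+ 2) = - a.
  by rewrite /a exprMn; field.
rewrite e1 e2.
have xa : x ^+ 2 = 8 * s ^+ 2 * a.
  by rewrite /a; field.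
rewrite xa.
have key : a * expR (- (4 * a)) <= expR (- a).
  have : a <= expR (3 * a).
    apply: le_trans (expR_ge1Dx _); nra.
  move=> h.
  have -> : expR (- a) = expR (3 * a) * expR (- (4 * a)).
    by rewrite -expRD; congr expR; ring.
  by rewrite ler_wpM2r // expR_ge0.
have -> : 8 * s ^+ 2 * normal_peak s / normal_peak (2 * s) *
   (normal_peak (2 * s) * expR (- a)) = 8 * s ^+ 2 * normal_peak s * expR (- a).
  by field; rewrite gt_eqF.
have h8 : 0 <= 8 * s ^+ 2 * normal_peak s by apply: mulr_ge0; [apply: mulr_ge0 => //; exact: ltW | exact: ltW].
apply: le_trans (ler_wpM2l h8 key).
by rewrite le_eqVlt; apply/orP; left; apply/eqP; ring.
Qed.

Lemma normal_sq_lt (s : R) : s != 0 ->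
  (\int[normal_prob 0 s]_x ((x ^+ 2)%:E) < +oo)%E.
Proof.
move=> s0.
have dom := @normal_prob_dominates R 0 s.
have mx2 : measurable_fun [set: R] (EFin \o (fun x : R => x ^+ 2)).
  apply/measurable_EFinP; exact: exprn_measurable.
rewrite -(@Radon_Nikodym_SigmaFinite.change_of_variables _ _ R (normal_prob 0 s) mu dom (fun x => (x ^+ 2)%:E) setT) //; last first.
  by move=> x; rewrite lee_fin sqr_ge0.
set F := Radon_Nikodym_SigmaFinite.f _ _.
have Fae : ae_eq mu setT (fun x => (normal_pdf 0 s x)%:E) F.
  apply: integral_ae_eq => //.
  - exact: integrable_normal_pdf.
  - apply: measurable_int.
    exact: Radon_Nikodym_SigmaFinite.f_integrable.
  - move=> E _ mE.
    by rewrite -Radon_Nikodym_SigmaFinite.f_integral.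
rewrite (@ae_eq_integral _ _ _ mu setT (fun x : R => ((x ^+ 2)%:E * (normal_pdf 0 s x)%:E)%E)) //; last 3 first.
- apply: emeasurable_funM => //.
  apply: measurable_int; exact: Radon_Nikodym_SigmaFinite.f_integrable.
- apply/measurable_EFinP; apply: measurable_funM; first exact: exprn_measurable.
  exact: measurable_normal_pdf.
- apply: ae_eq_sym; exact: ae_eqe_mul2l.
set C := 8 * s ^+ 2 * normal_peak s / normal_peak (2 * s).
have s20 : 2 * s != 0 by rewrite mulf_neq0 // pnatr_eq0.
apply: (@le_lt_trans _ _ (\int[mu]_x (C%:E * (normal_pdf 0 (2 * s) x)%:E))%E).
  apply: ge0_le_integral => //.
  - by move=> x _; rewrite -EFinM lee_fin mulr_ge0 ?sqr_ge0 ?normal_pdf_ge0.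
  - apply/measurable_EFinP; apply: measurable_funM; first exact: exprn_measurable.
    exact: measurable_normal_pdf.
  - apply/measurable_EFinP; apply: measurable_funM => //.
    exact: measurable_normal_pdf.
  - move=> x _; rewrite -!EFinM lee_fin; exact: sq_normal_bound.
rewrite integralZl //; last exact: integrable_normal_pdf.
by rewrite integral_normal_pdf mule1 ltry.
Qed.
End gauss.
Section alg.
Variable R : rcfType.
Variable K : nat.
Variables (w : 'I_K -> R).
Hypothesis w0 : forall s, 0 <= w s.
Hypothesis w1 : \sum_(s < K) w s = 1.

Lemma wsum_center (a : 'I_K -> R) (m : R) :
  \sum_(s < K) w s * (a s - m) = \sum_(s < K) w s * a s - m.
Proof.
under eq_bigr do rewrite mulrBr.
by rewrite sumrB -mulr_suml w1 mul1r.
Qed.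

Lemma var_decomp (a : 'I_K -> R) (c : R) :
  \sum_(s < K) w s * (a s - c) ^+ 2 =
  \sum_(s < K) w s * (a s - \sum_(s' < K) w s' * a s') ^+ 2 +
  (\sum_(s' < K) w s' * a s' - c) ^+ 2.
Proof.
set m := \sum_(s' < K) w s' * a s'.
have e : forall s, w s * (a s - c) ^+ 2 =
  w s * (a s - m) ^+ 2 + (2 * (m - c)) * (w s * (a s - m)) + (m - c) ^+ 2 * w s.
  by move=> s; ring.
under eq_bigr do rewrite e.
rewrite !big_split /= -!mulr_sumr wsum_center w1 -/m subrr mulr0 addr0 mulr1.
by [].
Qed.

Lemma final_alg (b a : 'I_K -> R) (e alpha : R) :
  0 <= alpha <= 1 ->
  \sum_(s < K) w s * (a s - \sum_(s' < K) w s' * a s') ^+ 2 <=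
    alpha * \sum_(s < K) w s * (b s - \sum_(s' < K) w s' * b s') ^+ 2 ->
  (1 - Num.sqrt alpha) ^+ 2 * \sum_(s < K) w s * (b s - \sum_(s' < K) w s' * b s') ^+ 2
  <= \sum_(s < K) w s * (e + b s - a s) ^+ 2.
Proof.
move=> /andP[a0 a1] hW.
set mb := \sum_(s' < K) w s' * b s'.
set ma := \sum_(s' < K) w s' * a s'.
set B := fun s => b s - mb.
set G := fun s => a s - ma.
set V := \sum_(s < K) w s * B s ^+ 2.
set W := \sum_(s < K) w s * G s ^+ 2.
have V0 : 0 <= V by apply: sumr_ge0 => s _; rewrite mulr_ge0 ?sqr_ge0.
have W0 : 0 <= W by apply: sumr_ge0 => s _; rewrite mulr_ge0 ?sqr_ge0.
have sB : \sum_(s < K) w s * B s = 0 by rewrite wsum_center subrr.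
have sG : \sum_(s < K) w s * G s = 0 by rewrite wsum_center subrr.
set dl := e + mb - ma.
have step1 : \sum_(s < K) w s * (B s - G s) ^+ 2 <= \sum_(s < K) w s * (e + b s - a s) ^+ 2.
  have ee : forall s, w s * (e + b s - a s) ^+ 2 =
     w s * (B s - G s) ^+ 2 + (2 * dl) * (w s * B s) - (2 * dl) * (w s * G s) + dl ^+ 2 * w s.
    by move=> s; rewrite /B /G /dl; ring.
  under [X in _ <= X]eq_bigr do rewrite ee.
  rewrite !big_split /= sumrN -!mulr_sumr sB sG w1 !mulr0 subr0 addr0 mulr1.
  by rewrite lerDl sqr_ge0.
apply: le_trans step1.
have [a00|apos] := eqVneq alpha 0.
  rewrite a00 sqrtr0 subr0 expr1n mul1r.
  have W00 : W = 0 by apply/eqP; rewrite eq_le W0 andbT; move: hW; rewrite a00 mul0r.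
  have hs : forall s, w s * G s ^+ 2 = 0.
    move=> s; apply/eqP; move/eqP: W00; rewrite /W psumr_eq0; last first.
      by move=> i _; rewrite mulr_ge0 ?sqr_ge0.
    by move/allP => /(_ s); rewrite mem_index_enum => /(_ isT).
  rewrite le_eqVlt; apply/orP; left; apply/eqP; apply: eq_bigr => s _.
  move: (hs s) => /eqP; rewrite mulf_eq0 => /orP[/eqP ->|]; first by rewrite !mul0r.
  by rewrite sqrf_eq0 => /eqP ->; rewrite subr0.
have ap : 0 < alpha by rewrite lt_def apos a0.
set t := Num.sqrt alpha.
have t0 : 0 < t by rewrite sqrtr_gt0.
have tt : t ^+ 2 = alpha by rewrite sqr_sqrtr.
have pw : forall s, w s * ((1 - t) * B s ^+ 2 + (1 - t^-1) * G s ^+ 2) <= w s * (B s - G s) ^+ 2.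
  move=> s; apply: ler_wpM2l => //.
  rewrite -subr_ge0.
  have -> : (B s - G s) ^+ 2 - ((1 - t) * B s ^+ 2 + (1 - t^-1) * G s ^+ 2) =
     (t * B s - G s) ^+ 2 / t by field; rewrite gt_eqF.
  by rewrite divr_ge0 ?sqr_ge0 // ltW.
apply: le_trans (ler_sum _ (fun s _ => pw s)).
have -> : \sum_(s < K) w s * ((1 - t) * B s ^+ 2 + (1 - t^-1) * G s ^+ 2) =
   (1 - t) * V + (1 - t^-1) * W.
  rewrite /V /W mulr_sumr mulr_sumr -big_split /=; apply: eq_bigr => s _; ring.
have h1 : (1 - t^-1) * W >= (1 - t^-1) * (alpha * V).
  apply: ler_wnM2l => //.
  rewrite subr_le0 -[1]invr1 lef_pV2 ?posrE //.
  by rewrite -sqrtr1 ler_sqrt.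
apply: le_trans (lerD (lexx _) h1).
rewrite -tt le_eqVlt; apply/orP; left; apply/eqP; field.
by rewrite gt_eqF.
Qed.

End alg.
Section moments.
Context {R : realType} {d : measure_display} {T : measurableType d}
  (Q : probability T R).

Lemma integral_cstP (c : \bar R) : (\int[Q]_x c = c)%E.
Proof.
rewrite (_ : (fun _ => c) = cst c) // integral_cst // -[RHS]mule1.
congr (_ * _)%E; exact: probability_setT.
Qed.

Lemma L2_L1 (h : T -> R) : measurable_fun setT h ->
  (\int[Q]_x ((h x) ^+ 2)%:E < +oo)%E -> Q.-integrable setT (EFin \o h).
Proof.
move=> mh h2.
apply/integrableP; split; first exact/measurable_EFinP.
have mh2 : measurable_fun setT (fun x => ((h x) ^+ 2)%:E).
  by apply/measurable_EFinP; exact: measurable_funX.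
apply: (@le_lt_trans _ _ (\int[Q]_x ((1%:E : \bar R) + ((h x) ^+ 2)%:E))%E).
  apply: ge0_le_integral => //.
  - apply: measurableT_comp => //; exact/measurable_EFinP.
  - by apply: emeasurable_funD => //.
  - move=> x _; rewrite /= -EFinD lee_fin.
    have nx := normr_ge0 (h x); have e : `|h x| ^+ 2 = h x ^+ 2 := real_normK (num_real _).
    rewrite -e; nra.
rewrite ge0_integralD //; last by move=> x _; rewrite lee_fin sqr_ge0.
apply: lte_add_pinfty => //.
by rewrite integral_cstP ltry.
Qed.

Lemma L2_add (h g : T -> R) : measurable_fun setT h -> measurable_fun setT g ->
  (\int[Q]_x ((h x) ^+ 2)%:E < +oo)%E -> (\int[Q]_x ((g x) ^+ 2)%:E < +oo)%E ->
  (\int[Q]_x ((h x + g x) ^+ 2)%:E < +oo)%E.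
Proof.
move=> mh mg h2 g2.
have mh2 : measurable_fun setT (fun x => ((h x) ^+ 2)%:E).
  by apply/measurable_EFinP; exact: measurable_funX.
have mg2 : measurable_fun setT (fun x => ((g x) ^+ 2)%:E).
  by apply/measurable_EFinP; exact: measurable_funX.
apply: (@le_lt_trans _ _ (\int[Q]_x ((2%:E * ((h x) ^+ 2)%:E) + (2%:E * ((g x) ^+ 2)%:E)))%E).
  apply: ge0_le_integral => //.
  - by move=> x _; rewrite lee_fin sqr_ge0.
  - apply/measurable_EFinP; apply: measurable_funX; exact: measurable_funD.
  - by apply: emeasurable_funD => //; apply: emeasurable_funM.
  - move=> x _; rewrite -!EFinM -EFinD lee_fin -subr_ge0.
    have -> : 2 * h x ^+ 2 + 2 * g x ^+ 2 - (h x + g x) ^+ 2 = (h x - g x) ^+ 2 by ring.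
    exact: sqr_ge0.
rewrite ge0_integralD //; first last.
- by apply: emeasurable_funM.
- by move=> x _; rewrite -EFinM lee_fin mulr_ge0 ?sqr_ge0.
- by apply: emeasurable_funM.
- by move=> x _; rewrite -EFinM lee_fin mulr_ge0 ?sqr_ge0.
rewrite !ge0_integralZl_EFin //; try by move=> x _; rewrite lee_fin sqr_ge0.
by apply: lte_add_pinfty; apply: lte_mul_pinfty.
Qed.

Lemma L2_cst (c : R) : (\int[Q]_x ((c ^+ 2)%:E) < +oo)%E.
Proof.
by rewrite integral_cstP ltry.
Qed.

End moments.
Section more.
Context {R : realType}.

Lemma int_fin {d} {T : measurableType d} (mu : {measure set T -> \bar R}) (h : T -> R) :
  mu.-integrable setT (EFin \o h) -> (\int[mu]_x (h x)%:E = (fine (\int[mu]_x (h x)%:E))%:E)%E.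
Proof.
case/integrableP => mh hfin; rewrite fineK //.
rewrite -integral_fin_num_abs //; exact/measurable_EFinP.
Qed.

Lemma transfer_ge0 {d} {T : measurableType d} {mu : {measure set T -> \bar R}}
  {d'} {U : measurableType d'}
  {phi : T -> U} {nu : {measure set U -> \bar R}} (g : U -> \bar R) :
  measurable_fun setT phi -> measurable_fun setT g -> (forall y, (0 <= g y)%E) ->
  (forall A, measurable A -> mu (phi @^-1` A) = nu A) ->
  (\int[mu]_x g (phi x) = \int[nu]_y g y)%E.
Proof.
move=> mphi mg g0 hA.
have -> : (\int[mu]_x g (phi x) = \int[mu]_(x in phi @^-1` setT) (g \o phi) x)%E.
  by rewrite preimage_setT.
rewrite -ge0_integral_pushforward //.
by apply: eq_measure_integral => A mA _; exact: hA.
Qed.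

Lemma inner_meas {d} {Omega : measurableType d} {p : nat} (X : Omega -> 'rV[R]_p)
  (beta : 'rV[R]_p) :
  (forall i, measurable_fun setT (fun w => X w 0 i)) ->
  measurable_fun setT (fun om => inner (X om) beta).
Proof.
move=> mX; rewrite /inner; apply: measurable_sum => i.
by apply: measurable_funM => //; exact: measurable_cst.
Qed.

Lemma Z_L2 {d} {Omega : measurableType d} (P : probability Omega R) {p : nat}
  (Sigma : 'M[R]_p) (X : Omega -> 'rV[R]_p) (beta : 'rV[R]_p) :
  sym_posdef Sigma -> gaussian_vector P Sigma X ->
  (\int[P]_om ((inner (X om) beta) ^+ 2)%:E < +oo)%E.
Proof.
move=> [_ pd] [mX gX].
have [->|b0] := eqVneq beta 0.
  have -> : (fun om => ((inner (X om) 0) ^+ 2)%:E) = (fun _ => (0 : R)%:E).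
    apply/funext => om; rewrite /inner big1 ?expr0n //= => i _.
    by rewrite mxE mulr0.
  by rewrite integral_cstP ltry.
set s := Num.sqrt (quadform Sigma beta).
have s0 : s != 0 by rewrite gt_eqF // sqrtr_gt0 pd.
have eZ : (fun om => inner (X om) beta) = (fun w => inner beta (X w)).
  by apply/funext => om; rewrite /inner; apply: eq_bigr => i _; rewrite mulrC.
have hA : forall A, measurable A ->
    P ((fun om => inner (X om) beta) @^-1` A) = normal_prob 0 s A.
  by move=> A mA; rewrite eZ; exact: gX.
have mZ : measurable_fun (T := Omega) (U := measurableTypeR R) setT (fun om => inner (X om) beta).
  exact: (inner_meas X beta mX).
have mg : measurable_fun (T := measurableTypeR R) setT (fun y : R => (y ^+ 2)%:E).
  have h : measurable_fun [set: R] (fun y : R => ((y ^+ 2)%:E : \bar R)).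
    apply/measurable_EFinP; exact: exprn_measurable.
  exact: h.
rewrite (@transfer_ge0 d Omega P _ (measurableTypeR R) (fun om => inner (X om) beta) (normal_prob 0 s) (fun y : R => (y ^+ 2)%:E) mZ mg _ hA).
- exact: normal_sq_lt.
- by move=> y; rewrite lee_fin sqr_ge0.
Qed.

End more.
Section unfair.
Context {R : realType} {d : measure_display} {Omega : measurableType d}
  (P : probability Omega R) {p K : nat} (X : Omega -> 'rV[R]_p) (w : 'I_K -> R).
Hypothesis w0 : forall s, 0 <= w s.
Hypothesis w1 : \sum_(s < K) w s = 1.

Lemma U_upper (Z : Omega -> R) (mZ : measurable_fun setT Z)
  (Z2 : (\int[P]_om ((Z om) ^+ 2)%:E < +oo)%E)
  (f : 'rV[R]_p -> 'I_K -> R) (c : 'I_K -> R) (m : R) :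
  (forall om s, f (X om) s = Z om + c s) ->
  (unfairness P X w f <= (\sum_(s < K) w s * (c s - m) ^+ 2)%:E)%E.
Proof.
move=> hf.
have mZm : measurable_fun setT (fun om => Z om + m).
  by apply: measurable_funD => //; exact: measurable_cst.
pose nu := distribution P (mkmf _ mZm).
apply: ge_ereal_inf.
exists (\sum_(s < K) (w s)%:E * W2sq (law P (fun om => f (X om) s)) nu)%E.
  exists nu; split => //.
  rewrite /P2 /nu ge0_integral_distribution //=.
  - exact: (L2_add P Z (cst m) mZ (measurable_cst m) Z2 (L2_cst P m)).
  - apply/measurable_EFinP; exact: exprn_measurable.
  - by move=> y; rewrite lee_fin sqr_ge0.
rewrite -sumEFin; apply: lee_sum => s _.
rewrite EFinM; apply: lee_wpmul2l; first by rewrite lee_fin.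
have -> : (fun om => f (X om) s) = (fun om => Z om + c s) by apply/funext => om; exact: hf.
have mZc : measurable_fun setT (fun om => Z om + c s).
  by apply: measurable_funD => //; exact: measurable_cst.
apply: le_trans (@W2_upper _ _ _ P (fun om => Z om + c s) (fun om => Z om + m) mZc mZm) _.
have -> : (fun om => ((Z om + c s - (Z om + m)) ^+ 2)%:E) = (fun _ => ((c s - m) ^+ 2)%:E).
  by apply/funext => om; congr (_ %:E); ring.
by rewrite integral_cstP.
Qed.

Lemma U_lower (f : 'rV[R]_p -> 'I_K -> R) (a : 'I_K -> R) :
  admissible P X f ->
  (forall s, w s != 0 -> P.-integrable setT (EFin \o (fun om => f (X om) s)) /\
     (\int[P]_om (f (X om) s)%:E = (a s)%:E)%E) ->
  ((\sum_(s < K) w s * (a s - \sum_(s' < K) w s' * a s') ^+ 2)%:E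
     <= unfairness P X w f)%E.
Proof.
move=> adm ha.
apply: le_ereal_inf_tmp => _ [nu [P2nu ->]].
have inu : nu.-integrable setT EFin.
  exact: (@L2_L1 _ _ _ nu id (@measurable_id _ _ setT) P2nu).
set c := fine (\int[nu]_x x%:E)%E.
have hc : (\int[nu]_x x%:E = c%:E)%E := @int_fin _ _ _ nu id inu.
apply: (@le_trans _ _ (\sum_(s < K) w s * (a s - c) ^+ 2)%:E).
  by rewrite lee_fin (@var_decomp _ _ w w1 a c) lerDl sqr_ge0.
rewrite -sumEFin; apply: lee_sum => s _; rewrite EFinM.
have [->|ws] := eqVneq (w s) 0; first by rewrite !mul0e.
apply: lee_wpmul2l; first by rewrite lee_fin.
have [ia ea] := ha s ws.
exact: (@W2_lower _ _ _ P _ nu (a s) c (adm s) ia ea inu hc).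
Qed.

End unfair.
Theorem proposition5 (R : realType) (d : measure_display) (Omega : measurableType d)
  (P : probability Omega R) (p K : nat) (Sigma : 'M[R]_p) (X : Omega -> 'rV[R]_p)
  (beta : 'rV[R]_p) (b : 'I_K -> R) (w : 'I_K -> R) (alpha : R) :
  sym_posdef Sigma ->
  gaussian_vector P Sigma X ->
  simplex w ->
  0 <= alpha <= 1 ->
  let fstar := fun (x : 'rV[R]_p) (s : 'I_K) => inner x beta + b s in
  let falpha := fun (x : 'rV[R]_p) (s : 'I_K) =>
    inner x beta + Num.sqrt alpha * b s
    + (1 - Num.sqrt alpha) * \sum_(s' < K) w s' * b s' in
  [/\ admissible P X falpha,
      (unfairness P X w falpha <= alpha%:E * unfairness P X w fstar)%E &
      forall f : 'rV[R]_p -> 'I_K -> R,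
        admissible P X f ->
        (unfairness P X w f <= alpha%:E * unfairness P X w fstar)%E ->
        (risk P X w fstar falpha <= risk P X w fstar f)%E].
Proof.
move=> Spd Gv [w0 w1] aa fstar falpha.
have /andP[a0 a1] := aa.
have [mX _] := Gv.
pose Z := fun om => inner (X om) beta.
have mZ : measurable_fun setT Z := inner_meas X beta mX.
have Z2 : (\int[P]_om ((Z om) ^+ 2)%:E < +oo)%E := Z_L2 P Sigma X beta Spd Gv.
have iZ : P.-integrable setT (EFin \o Z) := L2_L1 P Z mZ Z2.
set ez := fine (\int[P]_om (Z om)%:E)%E.
have hez : (\int[P]_om (Z om)%:E = ez%:E)%E := int_fin P Z iZ.
set mb := \sum_(s' < K) w s' * b s'.
set V := \sum_(s < K) w s * (b s - mb) ^+ 2.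
have mZc : forall c : R, measurable_fun setT (fun om => Z om + c).
  by move=> c; apply: measurable_funD => //; exact: measurable_cst.
have iZc : forall c : R, P.-integrable setT (EFin \o (fun om => Z om + c)).
  move=> c; have -> : EFin \o (fun om => Z om + c) = (fun om => (Z om)%:E + (EFin \o cst c) om)%E.
    by apply/funext => om; rewrite /= EFinD.
  apply: integrableD => //; exact: finite_measure_integrable_cst.
have eZc : forall c : R, (\int[P]_om (Z om + c)%:E = (ez + c)%:E)%E.
  move=> c; have -> : (fun om => (Z om + c)%:E) = (fun om => (Z om)%:E + (EFin \o cst c) om)%E.
    by apply/funext => om; rewrite /= EFinD.
  rewrite integralD //; last exact: finite_measure_integrable_cst.
  rewrite hez (_ : (fun x => (EFin \o cst c) x) = (fun _ => c%:E)) //.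
  by rewrite integral_cstP EFinD.
have hUs : unfairness P X w fstar = V%:E.
  apply/eqP; rewrite eq_le; apply/andP; split.
    exact: (@U_upper _ _ _ P _ _ X w w0 Z mZ Z2 fstar b mb (fun _ _ => erefl)).
  have adms : admissible P X fstar by move=> s; exact: mZc.
  have hl := @U_lower _ _ _ P _ _ X w w0 w1 fstar (fun s => ez + b s) adms
    (fun s _ => conj (iZc (b s)) (eZc (b s))).
  have e1 : \sum_(s' < K) w s' * (ez + b s') = ez + mb.
    under eq_bigr do rewrite mulrDr.
    by rewrite big_split /= -mulr_suml w1 mul1r.
  have e2 : \sum_(s < K) w s * (ez + b s - (ez + mb)) ^+ 2 = V.
    by apply: eq_bigr => s _; congr (_ * _ ^+ 2); ring.
  by move: hl; rewrite /= e1 e2.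
set sa := Num.sqrt alpha.
have hfa : forall om s, falpha (X om) s = Z om + (sa * b s + (1 - sa) * mb).
  by move=> om s; rewrite /falpha addrA.
have asa : sa ^+ 2 = alpha by rewrite sqr_sqrtr.
split.
- move=> s.
  have -> : (fun om => falpha (X om) s) = (fun om => Z om + (sa * b s + (1 - sa) * mb)).
    by apply/funext => om; exact: hfa.
  exact: mZc.
- rewrite hUs -EFinM.
  apply: le_trans (@U_upper _ _ _ P _ _ X w w0 Z mZ Z2 falpha _ mb hfa) _.
  have eq : \sum_(s < K) w s * (sa * b s + (1 - sa) * mb - mb) ^+ 2 = alpha * V.
    rewrite /V [RHS]mulr_sumr; apply: eq_bigr => s _; rewrite -asa; ring.
  by rewrite eq.
move=> f adm hU.
have riskfa : risk P X w fstar falpha = ((1 - sa) ^+ 2 * V)%:E.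
  rewrite /risk.
  have ht : forall s, (\int[P]_om ((fstar (X om) s - falpha (X om) s) ^+ 2)%:E =
      (((1 - sa) * (b s - mb)) ^+ 2)%:E)%E.
    move=> s.
    have -> : (fun om => ((fstar (X om) s - falpha (X om) s) ^+ 2)%:E) =
        (fun _ => (((1 - sa) * (b s - mb)) ^+ 2)%:E).
      by apply/funext => om; rewrite hfa /fstar; congr (_%:E); rewrite /Z; ring.
    by rewrite integral_cstP.
  under eq_bigr do rewrite ht -EFinM.
  rewrite sumEFin; congr (_%:E); rewrite /V [RHS]mulr_sumr; apply: eq_bigr => s _; ring.
rewrite riskfa.
have [->|Rfin] := eqVneq (risk P X w fstar f) +oo%E; first exact: leey.
pose D := fun s om => fstar (X om) s - f (X om) s.
have mD : forall s, measurable_fun setT (D s).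
  by move=> s; apply: measurable_funB => //; exact: (mZc (b s)).
have D2 : forall s, w s != 0 -> (\int[P]_om ((D s om) ^+ 2)%:E < +oo)%E.
  move=> s ws.
  have wpos : 0 < w s by rewrite lt_def ws w0.
  have le1 : ((w s)%:E * \int[P]_om ((D s om) ^+ 2)%:E <= risk P X w fstar f)%E.
    rewrite /risk (bigD1 s) //=; apply: leeDl.
    apply: sume_ge0 => i _; apply: mule_ge0; first by rewrite lee_fin.
    by apply: integral_ge0 => om _; rewrite lee_fin sqr_ge0.
  rewrite ltey; apply/negP => /eqP h; move: le1; rewrite h.
  by rewrite muleC gt0_mulye ?lte_fin // leye_eq (negbTE Rfin).
pose dd := fun s => fine (\int[P]_om (D s om)%:E)%E.
pose a := fun s => ez + b s - dd s.
have iD : forall s, w s != 0 -> P.-integrable setT (EFin \o D s) :=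
  fun s ws => L2_L1 P (D s) (mD s) (D2 s ws).
have eD : forall s, w s != 0 -> (\int[P]_om (D s om)%:E = (dd s)%:E)%E :=
  fun s ws => int_fin P (D s) (iD s ws).
have fD : forall s om, f (X om) s = Z om + b s - D s om.
  by move=> s om; rewrite /D /fstar /Z; ring.
have hl := @U_lower _ _ _ P _ _ X w w0 w1 f a adm.
have hl2 : ((\sum_(s < K) w s * (a s - \sum_(s' < K) w s' * a s') ^+ 2)%:E
     <= unfairness P X w f)%E.
  apply: hl => s ws.
  have ef : (fun om => (f (X om) s)%:E) = (fun om => (Z om + b s)%:E - (D s om)%:E)%E.
    by apply/funext => om; rewrite fD EFinB.
  split.
    rewrite (_ : EFin \o (fun om => f (X om) s) = (fun om => (Z om + b s)%:E - (D s om)%:E)%E) //.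
    exact: integrableB (iZc (b s)) (iD s ws).
  rewrite ef integralB //; [| exact: iZc | exact: iD].
  by rewrite eZc (eD s ws) -EFinB.
have hvar : \sum_(s < K) w s * (a s - \sum_(s' < K) w s' * a s') ^+ 2 <= alpha * V.
  by have := le_trans hl2 hU; rewrite hUs -EFinM lee_fin.
have key := @final_alg _ _ w w0 w1 b a ez alpha aa hvar.
apply: (@le_trans _ _ (\sum_(s < K) w s * (dd s) ^+ 2)%:E).
  rewrite lee_fin; apply: le_trans key _.
  rewrite le_eqVlt; apply/orP; left; apply/eqP; apply: eq_bigr => s _.
  by rewrite /a; congr (_ * _ ^+ 2); ring.
rewrite /risk -sumEFin; apply: lee_sum => s _; rewrite EFinM.
have [->|ws] := eqVneq (w s) 0; first by rewrite !mul0e.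
apply: lee_wpmul2l; first by rewrite lee_fin.
exact: (@jensen_sq _ _ _ P (D s) (dd s) (mD s) (iD s ws) (eD s ws)).
Qed.
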